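(* In the FitzHugh–Nagumo setup, suppose $0<\epsilon<\frac{c^4}{16}$. Let $\lambda\ge0$ be a real eigenvalue of $L_\epsilon$ and $P=(p,q)$ a corresponding nonzero real-valued eigenfunction. Then $$\int_{-\infty}^{\infty}e^{cz}\Big(p(z)^2-\frac{q(z)^2}{\epsilon}\Big)\,dz>0.$$
   Context: FitzHugh–Nagumo setup. Fix $0<a<1/2$, $\gamma>0$, $\epsilon>0$, and $g(u)=u(1-u)(u-a)$. Consider $u_t=u_{xx}+g(u)-v$, $v_t=v_{xx}+\epsilon(u-\gamma v)$. Let $c<0$ and let $(\hat u,\hat v)(z)$, $z=x-ct$, be a traveling pulse: a solution of $\hat u''+c\hat u'+g(\hat u)-\hat v=0$, $\hat v''+c\hat v'+\epsilon(\hat u-\gamma\hat v)=0$ tending to $0$ exponentially (with derivatives) as $z\to\pm\infty$. Linearized operator: $L_\epsilon=\partial_z^2+c\partial_z+\begin{pmatrix}g'(\hat u)&-1\\ \epsilon&-\epsilon\gamma\end{pmatrix}$; $\lambda$ is an eigenvalue if $L_\epsilon P=\lambda P$ has a nonzero bounded uniformly continuous solution $P$ (such eigenfunctions decay exponentially at both ends, fast enough that the integral above converges). *)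

(* Defs.v *)
From Stdlib Require Import Reals.
Open Scope R_scope.

Definition g (a u : R) : R := u * (1 - u) * (u - a).
Definition g' (a u : R) : R := - 3 * u ^ 2 + 2 * (1 + a) * u - a.

Definition twice_diff (f f1 f2 : R -> R) : Prop :=
  (forall z, derivable_pt_lim f z (f1 z)) /\ (forall z, derivable_pt_lim f1 z (f2 z)).

Definition traveling_pulse (a gamma eps c : R)
    (uh uh1 uh2 vh vh1 vh2 : R -> R) : Prop :=
  twice_diff uh uh1 uh2 /\ twice_diff vh vh1 vh2 /\
  (forall z, uh2 z + c * uh1 z + g a (uh z) - vh z = 0) /\
  (forall z, vh2 z + c * vh1 z + eps * (uh z - gamma * vh z) = 0) /\
  (exists K mu, 0 < mu /\ forall z,
     Rabs (uh z) + Rabs (uh1 z) + Rabs (uh2 z)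
     + Rabs (vh z) + Rabs (vh1 z) + Rabs (vh2 z) <= K * exp (- mu * Rabs z)).

Definition bounded_fun (f : R -> R) : Prop := exists M, forall z, Rabs (f z) <= M.

Definition unif_cont (f : R -> R) : Prop :=
  forall e, 0 < e -> exists d, 0 < d /\
    forall x y, Rabs (x - y) < d -> Rabs (f x - f y) < e.

(* P = (p,q) (with derivatives p1,p2,q1,q2) is a nonzero bounded uniformly
   continuous solution of L_eps P = lambda P, where
   L_eps = d^2/dz^2 + c d/dz + [[g'(uh), -1], [eps, -eps*gamma]]. *)
Definition eigenfunction (a gamma eps c : R) (uh : R -> R) (lambda : R)
    (p p1 p2 q q1 q2 : R -> R) : Prop :=
  twice_diff p p1 p2 /\ twice_diff q q1 q2 /\
  (forall z, p2 z + c * p1 z + g' a (uh z) * p z - q z = lambda * p z) /\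
  (forall z, q2 z + c * q1 z + eps * p z - eps * gamma * q z = lambda * q z) /\
  bounded_fun p /\ bounded_fun q /\ unif_cont p /\ unif_cont q /\
  (exists z, p z <> 0 \/ q z <> 0).

Definition improper_integral_R (f : R -> R) (I : R) : Prop :=
  exists F : R -> R, exists Lm Lp : R,
    (forall z, derivable_pt_lim F z (f z)) /\
    (forall e, 0 < e -> exists A, forall z, A <= z -> Rabs (F z - Lp) < e) /\
    (forall e, 0 < e -> exists A, forall z, z <= A -> Rabs (F z - Lm) < e) /\
    I = Lp - Lm.

(* Main.v *)
Require Import Defs.
From Stdlib Require Import Reals Lra Psatz.
From Coquelicot Require Import Coquelicot.
Open Scope R_scope.

Lemma antideriv (g : R -> R) : (forall z, continuity_pt g z) ->
  forall z, derivable_pt_lim (fun x => RInt g 0 x) z (g z).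
Proof.
  intros Hc z. apply is_derive_Reals.
  assert (Hc' : forall x, continuous g x).
  { intro x. apply continuity_pt_filterlim. apply Hc. }
  apply (is_derive_RInt g (fun x => RInt g 0 x) 0 z).
  - exists (mkposreal 1 Rlt_0_1). intros y _. apply (@RInt_correct R_CompleteNormedModule).
    apply ex_RInt_continuous. intros; apply Hc'.
  - apply Hc'.
Qed.

Lemma incr_of_deriv (F F' : R -> R) : (forall z, derivable_pt_lim F z (F' z)) ->
  (forall z, 0 <= F' z) -> forall x y, x <= y -> F x <= F y.
Proof.
  intros HD Hp.
  pose (pr := fun z => exist (fun l => derivable_pt_lim F z l) (F' z) (HD z) : derivable_pt F z).
  assert (Hi : increasing F).
  { apply (nonneg_derivative_1 F pr). intro x.
    replace (derive_pt F x (pr x)) with (F' x). apply Hp.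
    symmetry. apply derive_pt_eq_0. apply HD. }
  exact Hi.
Qed.

Lemma lim_pinf (F : R -> R) (M : R) : (forall x y, x <= y -> F x <= F y) ->
  (forall z, F z <= M) ->
  exists L, forall e, 0 < e -> exists A, forall z, A <= z -> Rabs (F z - L) < e.
Proof.
  intros Hi HM.
  destruct (completeness (fun y => exists z, y = F z)) as [L [Hub Hlub]].
  - exists M. intros y [z ->]. apply HM.
  - exists (F 0), 0. reflexivity.
  - exists L. intros e He.
    destruct (Classical_Prop.classic (exists z, L - e < F z)) as [[z Hz]|Hn].
    + exists z. intros w Hw. assert (F z <= F w) by (apply Hi; lra).
      assert (F w <= L) by (apply Hub; exists w; reflexivity).
      apply Rabs_def1; lra.
    + exfalso. assert (L <= L - e); [|lra]. apply Hlub. intros y [z ->].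
      destruct (Rle_dec (F z) (L - e)); auto. exfalso; apply Hn; exists z; lra.
Qed.

Lemma lim_minf (F : R -> R) (M : R) : (forall x y, x <= y -> F x <= F y) ->
  (forall z, M <= F z) ->
  exists L, forall e, 0 < e -> exists A, forall z, z <= A -> Rabs (F z - L) < e.
Proof.
  intros Hi HM.
  destruct (lim_pinf (fun z => - F (- z)) (- M)) as [L HL].
  - intros x y H. assert (F (- y) <= F (- x)) by (apply Hi; lra). lra.
  - intro z. specialize (HM (- z)). lra.
  - exists (- L). intros e He. destruct (HL e He) as [A HA].
    exists (- A). intros z Hz. specialize (HA (- z) ltac:(lra)).
    rewrite Ropp_involutive in HA.
    replace (F z - - L) with (- (- F z - L)) by ring. rewrite Rabs_Ropp. exact HA.
Qed.

Lemma exp_ge1 x : 1 + x <= exp x.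
Proof. destruct (Req_dec x 0) as [->|H]. rewrite exp_0; lra. left; apply exp_ineq1; auto. Qed.

Lemma decay_bound mu z : 0 < mu -> (1 + z^2) * exp (- mu * Rabs z) <= (4 + mu^2) / mu^2.
Proof.
  intros Hm. set (t := mu * Rabs z / 2).
  assert (Ht : 0 <= t) by (unfold t; pose proof (Rabs_pos z); nra).
  assert (E : exp (mu * Rabs z) = exp t * exp t) by (rewrite <- exp_plus; f_equal; unfold t; field).
  assert (E2 : exp (- mu * Rabs z) * exp (mu * Rabs z) = 1)
    by (rewrite <- exp_plus; replace (- mu * Rabs z + mu * Rabs z) with 0 by ring; apply exp_0).
  pose proof (exp_ge1 t). pose proof (exp_pos (- mu * Rabs z)).
  assert (Hz2 : z^2 = Rabs z ^ 2) by (rewrite RPow_abs; rewrite Rabs_right; [auto| apply Rle_ge, pow2_ge_0]).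
  assert (Hm2 : 0 < mu^2) by nra.
  apply (Rmult_le_reg_r (mu^2)); auto.
  replace ((4 + mu^2) / mu^2 * mu^2) with (4 + mu^2) by (field; lra).
  assert (exp (mu * Rabs z) >= 1 + t^2) by nra.
  assert (mu^2 * (1+z^2) <= (4+mu^2) * exp (mu * Rabs z)).
  { rewrite Hz2. assert (t^2 = mu^2 * Rabs z ^2 / 4) by (unfold t; field). nra. }
  nra.
Qed.

Lemma tends0 (h : R -> R) D : (forall z, Rabs (h z) <= D / (1 + z^2)) ->
  (forall e, 0 < e -> exists A, forall z, A <= z -> Rabs (h z) < e) /\
  (forall e, 0 < e -> exists A, forall z, z <= A -> Rabs (h z) < e).
Proof.
  intros Hb.
  assert (HD : 0 <= D) by (specialize (Hb 0); pose proof (Rabs_pos (h 0));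
     replace (1 + 0^2) with 1 in Hb by ring; lra).
  assert (key : forall e z, 0 < e -> D / e + 1 <= Rabs z -> Rabs (h z) < e).
  { intros e z He Hz. eapply Rle_lt_trans. apply Hb.
    assert (z^2 = Rabs z ^ 2) by (rewrite RPow_abs; rewrite Rabs_right; [auto| apply Rle_ge, pow2_ge_0]).
    assert (0 <= D / e) by (apply Rdiv_le_0_compat; lra).
    assert (D < e * (1 + z^2)).
    { assert (D = e * (D / e)) by (field; lra).
      assert (Rabs z <= Rabs z ^ 2) by nra.
      assert (D / e < 1 + z^2) by lra. nra. }
    apply (Rmult_lt_reg_r (1 + z^2)). nra.
    replace (D / (1 + z^2) * (1 + z^2)) with D by (field; nra). lra. }
  split; intros e He.
  - exists (D / e + 1). intros z Hz. apply key; auto.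
    assert (0 <= D/e) by (apply Rdiv_le_0_compat; lra). rewrite Rabs_right; lra.
  - exists (- (D / e + 1)). intros z Hz. apply key; auto.
    assert (0 <= D/e) by (apply Rdiv_le_0_compat; lra). rewrite Rabs_left; lra.
Qed.

Lemma improper_pos (g : R -> R) D z0 : (forall z, continuity_pt g z) ->
  (forall z, 0 <= g z) -> (forall z, g z <= D / (1 + z^2)) -> 0 < g z0 ->
  exists G Lm Lp, (forall z, derivable_pt_lim G z (g z)) /\
    (forall e, 0 < e -> exists A, forall z, A <= z -> Rabs (G z - Lp) < e) /\
    (forall e, 0 < e -> exists A, forall z, z <= A -> Rabs (G z - Lm) < e) /\
    Lm < Lp.
Proof.
  intros Hc Hp Hb Hz0.
  set (G := fun x => RInt g 0 x).
  assert (HG := antideriv g Hc).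
  assert (Hi := incr_of_deriv G g HG Hp).
  assert (HD : 0 <= D) by (specialize (Hb 0); specialize (Hp 0);
     replace (1 + 0^2) with 1 in Hb by ring; lra).
  set (H := fun x => D * atan x).
  assert (HH : forall z, derivable_pt_lim (fun x => H x - G x) z (D / (1 + z^2) - g z)).
  { intro z. apply (derivable_pt_lim_minus H G). unfold H.
    replace (D / (1 + z^2)) with (D * / (1 + z^2)) by (unfold Rdiv; auto).
    apply derivable_pt_lim_scal. apply derivable_pt_lim_atan. apply HG. }
  assert (Hi2 := incr_of_deriv _ _ HH ltac:(intro z; specialize (Hb z); lra)).
  assert (H0 : H 0 = 0) by (unfold H; rewrite atan_0; ring).
  assert (HHb : forall z, - (D * (PI/2)) <= H z <= D * (PI/2)).
  { intro z; unfold H; pose proof (atan_bound z). split; nra. }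
  destruct (lim_pinf G (G 0 + D * (PI/2)) Hi) as [Lp HLp].
  { intro z. destruct (Rle_dec z 0).
    - assert (G z <= G 0) by (apply Hi; lra). pose proof PI_RGT_0. nra.
    - assert (H 0 - G 0 <= H z - G z) by (apply (Hi2 0 z); lra). specialize (HHb z). lra. }
  destruct (lim_minf G (G 0 - D * (PI/2)) Hi) as [Lm HLm].
  { intro z. destruct (Rle_dec z 0).
    - assert (H z - G z <= H 0 - G 0) by (apply (Hi2 z 0); lra). specialize (HHb z). lra.
    - assert (G 0 <= G z) by (apply Hi; lra). pose proof PI_RGT_0. nra. }
  exists G, Lm, Lp. split; [exact HG|]. split; [exact HLp|]. split; [exact HLm|].
  assert (Up : forall z, G z <= Lp).
  { intro z. destruct (Rle_dec (G z) Lp) as [|Hn]; auto. exfalso.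
    destruct (HLp (G z - Lp) ltac:(lra)) as [A HA].
    specialize (HA (Rmax A z) (Rmax_l _ _)).
    assert (G z <= G (Rmax A z)) by (apply Hi, Rmax_r).
    apply Rabs_def2 in HA. lra. }
  assert (Lo : forall z, Lm <= G z).
  { intro z. destruct (Rle_dec Lm (G z)) as [|Hn]; auto. exfalso.
    destruct (HLm (Lm - G z) ltac:(lra)) as [A HA].
    specialize (HA (Rmin A z) (Rmin_l _ _)).
    assert (G (Rmin A z) <= G z) by (apply Hi, Rmin_r).
    apply Rabs_def2 in HA. lra. }
  destruct (HG z0 (g z0) Hz0) as [d Hd].
  set (t := d / 2).
  assert (Ht : 0 < t) by (unfold t; destruct d; simpl; lra).
  specialize (Hd t ltac:(lra) ltac:(rewrite Rabs_right; unfold t; destruct d; simpl; lra)).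
  apply Rabs_def2 in Hd. destruct Hd as [_ Hd].
  change (- g z0 < (G (z0 + t) - G z0) / t - g z0) in Hd. assert (0 < (G (z0 + t) - G z0) / t) by lra.
  assert (0 < G (z0 + t) - G z0).
  { replace (G (z0 + t) - G z0) with ((G (z0 + t) - G z0) / t * t) by (field; lra). nra. }
  specialize (Up (z0 + t)). specialize (Lo z0). lra.
Qed.

Lemma deq f x l l' : derivable_pt_lim f x l -> l = l' -> derivable_pt_lim f x l'.
Proof. intros H ->; exact H. Qed.
Lemma dmul f g x a b : derivable_pt_lim f x a -> derivable_pt_lim g x b ->
  derivable_pt_lim (fun y => f y * g y) x (a * g x + f x * b).
Proof. intros; apply (derivable_pt_lim_mult f g x a b); auto. Qed.
Lemma dplus f g x a b : derivable_pt_lim f x a -> derivable_pt_lim g x b ->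
  derivable_pt_lim (fun y => f y + g y) x (a + b).
Proof. intros; apply (derivable_pt_lim_plus f g x a b); auto. Qed.
Lemma dscal f x a al : derivable_pt_lim f x a ->
  derivable_pt_lim (fun y => al * f y) x (al * a).
Proof. intros; apply (derivable_pt_lim_scal f al x a); auto. Qed.
Lemma dE c z : derivable_pt_lim (fun y => exp (c*y/2)) z (c/2 * exp (c*z/2)).
Proof. apply is_derive_Reals. auto_derive; auto. unfold Rdiv; ring. Qed.
Lemma dcont f x l : derivable_pt_lim f x l -> continuity_pt f x.
Proof. intro H. apply derivable_continuous_pt. exists l; exact H. Qed.
Lemma cmul f g x : continuity_pt f x -> continuity_pt g x -> continuity_pt (fun y => f y * g y) x.
Proof. intros; apply (continuity_pt_mult f g x); auto. Qed.
Lemma cplus f g x : continuity_pt f x -> continuity_pt g x -> continuity_pt (fun y => f y + g y) x.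
Proof. intros; apply (continuity_pt_plus f g x); auto. Qed.
Lemma cminus f g x : continuity_pt f x -> continuity_pt g x -> continuity_pt (fun y => f y - g y) x.
Proof. intros; apply (continuity_pt_minus f g x); auto. Qed.
Lemma ccst a x : continuity_pt (fun _ => a) x.
Proof. apply continuity_pt_const. intros u v; reflexivity. Qed.
Lemma copp f x : continuity_pt f x -> continuity_pt (fun y => - f y) x.
Proof. intros; apply (continuity_pt_opp f x); auto. Qed.
Lemma abs_sq x : Rabs x * Rabs x = x * x.
Proof. destruct (Rcase_abs x); [rewrite Rabs_left|rewrite Rabs_right]; auto; ring. Qed.
Lemma sq_le x b : Rabs x <= b -> x * x <= b * b.
Proof. intro H. rewrite <- abs_sq. pose proof (Rabs_pos x). nra. Qed.
Lemma u_bound mu z : 0 < mu ->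
  exp (- mu * Rabs z) * exp (- mu * Rabs z) <= ((4 + mu^2)/mu^2) / (1 + z^2).
Proof.
  intro Hm. pose proof (decay_bound mu z Hm).
  pose proof (exp_pos (- mu * Rabs z)).
  assert (exp (- mu * Rabs z) <= 1).
  { rewrite <- exp_0. destruct (Req_dec (- mu * Rabs z) 0) as [E|E]; [rewrite E; lra|].
    left; apply exp_increasing. pose proof (Rabs_pos z). nra. }
  assert (0 < 1 + z^2) by (pose proof (pow2_ge_0 z); lra).
  apply (Rmult_le_reg_r (1 + z^2)); auto.
  replace ((4 + mu^2)/mu^2 / (1 + z^2) * (1 + z^2)) with ((4 + mu^2)/mu^2) by (field; lra).
  nra.
Qed.
Theorem theorem5p3 :
  forall (a gamma eps c lambda : R)
    (uh uh1 uh2 vh vh1 vh2 p p1 p2 q q1 q2 : R -> R),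
    0 < a -> a < 1 / 2 -> 0 < gamma -> 0 < eps -> c < 0 ->
    traveling_pulse a gamma eps c uh uh1 uh2 vh vh1 vh2 ->
    eps < c ^ 4 / 16 ->
    0 <= lambda ->
    eigenfunction a gamma eps c uh lambda p p1 p2 q q1 q2 ->
    (* the exponential decay of eigenfunctions asserted in the setup,
       fast enough that the weighted integral converges *)
    (exists K mu, 0 < mu /\ forall z,
       Rabs (p z) + Rabs (p1 z) + Rabs (q z) + Rabs (q1 z)
       <= K * exp (- (c / 2) * z - mu * Rabs z)) ->
    exists I,
      improper_integral_R (fun z => exp (c * z) * (p z ^ 2 - q z ^ 2 / eps)) I
      /\ I > 0.
Proof.
  intros a gamma eps c lambda uh uh1 uh2 vh vh1 vh2 p p1 p2 q q1 q2
    Ha Ha2 Hg He Hc _ Heps Hl Heig [K [mu [Hmu Hdec]]].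
  destruct Heig as [[Hp Hp1] [[Hq Hq1] [_ [E2 [_ [_ [_ [_ [z0 Hz0]]]]]]]]].
  set (k := c^2/4 + lambda + eps*gamma).
  assert (Hk : c^2/4 <= k) by (unfold k; nra).
  assert (Hk2 : eps < k^2).
  { assert (0 <= c^2/4) by nra. assert ((c^2/4)^2 <= k^2) by nra.
    assert ((c^2/4)^2 = c^4/16) by field. lra. }
  assert (Hkp : 0 < k) by (assert (0 < c^2) by nra; lra).
  set (r := k/eps). set (beta := 2*r/eps). set (s := r^2 - 1/eps).
  assert (Hr : 0 < r) by (unfold r; apply Rdiv_lt_0_compat; lra).
  assert (Hb : 0 < beta) by (unfold beta; apply Rdiv_lt_0_compat; lra).
  assert (Hs : 0 < s).
  { unfold s, r. assert (k^2/eps^2 > 1/eps).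
    { apply (Rmult_lt_reg_r (eps^2)). nra.
      replace (1/eps*eps^2) with eps by (field; lra).
      replace (k^2/eps^2*eps^2) with (k^2) by (field; lra). lra. }
    replace ((k/eps)^2) with (k^2/eps^2) by (field; lra). lra. }
  set (g := fun z => beta * ((exp (c*z/2) * (q1 z + c/2 * q z)) * (exp (c*z/2) * (q1 z + c/2 * q z)))
     + (exp (c*z/2) * p z - r * (exp (c*z/2) * q z)) * (exp (c*z/2) * p z - r * (exp (c*z/2) * q z))
     + s * ((exp (c*z/2) * q z) * (exp (c*z/2) * q z))).
  set (hh := fun z => (exp (c*z/2) * q z) * (exp (c*z/2) * (q1 z + c/2 * q z))).
  assert (dQ : forall z, derivable_pt_lim (fun y => exp (c*y/2) * q y) z
      (exp (c*z/2) * (q1 z + c/2 * q z))).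
  { intro z. eapply deq. apply dmul. apply dE. apply Hq. cbv beta; field. }
  assert (dQ1 : forall z, derivable_pt_lim (fun y => exp (c*y/2) * (q1 y + c/2 * q y)) z
      (k * (exp (c*z/2) * q z) - eps * (exp (c*z/2) * p z))).
  { intro z. eapply deq. apply dmul. apply dE. apply dplus. apply Hq1. apply dscal. apply Hq.
    specialize (E2 z). unfold k. cbv beta.
    replace (q2 z) with (lambda * q z - c * q1 z - eps * p z + eps * gamma * q z) by lra. cbv beta; field. }
  assert (dh : forall z, derivable_pt_lim hh z
      ((exp (c*z/2) * (q1 z + c/2 * q z)) * (exp (c*z/2) * (q1 z + c/2 * q z))
       + (exp (c*z/2) * q z) * (k * (exp (c*z/2) * q z) - eps * (exp (c*z/2) * p z)))).
  { intro z. unfold hh. eapply deq. apply dmul. apply dQ. apply dQ1. cbv beta; field. }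
  assert (Hcg : forall z, continuity_pt g z).
  { intro z. unfold g.
    repeat (first [apply cplus | apply cminus | apply copp | apply cmul | apply ccst
      | (eapply dcont; apply dE) | (eapply dcont; apply Hp) | (eapply dcont; apply Hq)
      | (eapply dcont; apply Hq1)]). }
  assert (Hbd : forall z,
    Rabs (exp (c*z/2) * p z) <= K * exp (- mu * Rabs z) /\ Rabs (exp (c*z/2) * q z) <= K * exp (- mu * Rabs z) /\ Rabs (exp (c*z/2) * (q1 z + c/2 * q z)) <= (1 + Rabs c) * (K * exp (- mu * Rabs z))).
  { intro z. specialize (Hdec z). pose proof (exp_pos (c*z/2)) as Hep.
    assert (Hx : exp (c*z/2) * exp (- (c/2)*z - mu*Rabs z) = exp (- mu * Rabs z))
      by (rewrite <- exp_plus; f_equal; field).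
    assert (Hm : exp (c*z/2) * (Rabs (p z) + Rabs (p1 z) + Rabs (q z) + Rabs (q1 z))
       <= K * exp (- mu * Rabs z)).
    { rewrite <- Hx. replace (K * (exp (c * z / 2) * exp (- (c / 2) * z - mu * Rabs z)))
        with (exp (c * z / 2) * (K * exp (- (c / 2) * z - mu * Rabs z))) by ring.
      apply Rmult_le_compat_l; lra. }
    rewrite !Rabs_mult. rewrite (Rabs_right (exp (c*z/2))) by lra.
    pose proof (Rabs_pos (p z)). pose proof (Rabs_pos (p1 z)).
    pose proof (Rabs_pos (q z)). pose proof (Rabs_pos (q1 z)).
    assert (Hq1b : Rabs (q1 z + c/2 * q z) <= Rabs (q1 z) + (- c / 2) * Rabs (q z)).
    { eapply Rle_trans. apply Rabs_triang. rewrite Rabs_mult.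
      rewrite (Rabs_left (c/2)) by lra. lra. }
    rewrite (Rabs_left c) by lra.
    set (e := exp (c * z / 2)) in *. set (v := K * exp (- mu * Rabs z)) in *.
    assert (e * Rabs (p z) <= v) by nra.
    assert (e * Rabs (q z) <= v) by nra.
    assert (e * Rabs (q1 z + c / 2 * q z) <= e * (Rabs (q1 z) + - c / 2 * Rabs (q z)))
      by (apply Rmult_le_compat_l; lra).
    assert (e * (Rabs (q1 z) + - c / 2 * Rabs (q z)) <= (1 + - c) * (e * (Rabs (p z) + Rabs (p1 z) + Rabs (q z) + Rabs (q1 z)))).
    { assert (0 <= e * Rabs (p z)) by nra. assert (0 <= e * Rabs (p1 z)) by nra.
      assert (0 <= e * Rabs (q z)) by nra. assert (0 <= e * Rabs (q1 z)) by nra.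
      assert (0 <= (1 - c) * (e * Rabs (p z))) by nra.
      assert (0 <= (1 - c) * (e * Rabs (p1 z))) by nra.
      assert (0 <= (1 - c/2) * (e * Rabs (q z))) by nra.
      assert (0 <= (- c) * (e * Rabs (q1 z))) by nra.
      assert ((1 + - c) * (e * (Rabs (p z) + Rabs (p1 z) + Rabs (q z) + Rabs (q1 z)))
        - e * (Rabs (q1 z) + - c / 2 * Rabs (q z)) =
        (1 - c) * (e * Rabs (p z)) + (1 - c) * (e * Rabs (p1 z)) + (1 - c/2) * (e * Rabs (q z))
        + (- c) * (e * Rabs (q1 z))) by field.
      lra. }
    assert ((1 + - c) * (e * (Rabs (p z) + Rabs (p1 z) + Rabs (q z) + Rabs (q1 z))) <= (1 + - c) * v)
      by (apply Rmult_le_compat_l; lra).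
    split; [|split]; lra. }
  set (Cm := (4 + mu^2)/mu^2).
  set (Cg := beta * (1 + Rabs c)^2 + 2 + 2 * r^2 + s).
  assert (Hgb : forall z, g z <= (Cg * K^2 * Cm) / (1 + z^2)).
  { intro z. destruct (Hbd z) as [B1 [B2 B3]]. pose proof (u_bound mu z Hmu) as Hu.
    fold Cm in Hu.
    apply sq_le in B1. apply sq_le in B2. apply sq_le in B3.
    set (P := exp (c*z/2) * p z) in *. set (Q := exp (c*z/2) * q z) in *.
    set (Q1 := exp (c*z/2) * (q1 z + c/2 * q z)) in *.
    set (u := exp (- mu * Rabs z)) in *.
    assert (Hz : 0 < 1 + z^2) by (pose proof (pow2_ge_0 z); lra).
    replace (Cg * K^2 * Cm / (1 + z^2)) with (Cg * K^2 * (Cm / (1 + z^2))) by (field; lra).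
    assert (HCg : 0 <= Cg) by (unfold Cg; pose proof (pow2_ge_0 (1 + Rabs c)); pose proof (pow2_ge_0 r); nra).
    assert (g z = beta * (Q1 * Q1) + (P - r * Q) * (P - r * Q) + s * (Q * Q)) by reflexivity.
    assert (g z <= Cg * (K * u * (K * u))).
    { assert ((P - r * Q) * (P - r * Q) <= 2 * (P*P) + 2 * r^2 * (Q*Q)) by (pose proof (pow2_ge_0 (P + r*Q)); nra).
      assert (beta * (Q1*Q1) <= beta * ((1 + Rabs c)^2 * (K*u*(K*u)))).
      { apply Rmult_le_compat_l; [lra|]. nra. }
      assert (0 <= K*u*(K*u)) by nra.
      unfold Cg. nra. }
    assert (K * u * (K * u) = K^2 * (u*u)) by ring.
    assert (0 <= K^2) by apply pow2_ge_0.
    assert (Cg * K^2 * (u*u) <= Cg * K^2 * (Cm / (1 + z^2))) by (apply Rmult_le_compat_l; nra).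
    assert (Cg * (K * u * (K * u)) = Cg * K^2 * (u*u)) by (rewrite H1; ring).
    lra. }
  assert (Hhb : forall z, Rabs (hh z) <= ((1 + Rabs c) * K^2 * Cm) / (1 + z^2)).
  { intro z. destruct (Hbd z) as [B1 [B2 B3]]. pose proof (u_bound mu z Hmu) as Hu.
    fold Cm in Hu. unfold hh. rewrite Rabs_mult.
    assert (Hz : 0 < 1 + z^2) by (pose proof (pow2_ge_0 z); lra).
    replace ((1 + Rabs c) * K^2 * Cm / (1 + z^2)) with ((1 + Rabs c) * K^2 * (Cm / (1 + z^2))) by (field; lra).
    pose proof (Rabs_pos (exp (c * z / 2) * q z)).
    pose proof (Rabs_pos (exp (c * z / 2) * (q1 z + c / 2 * q z))).
    pose proof (Rabs_pos c). assert (0 <= K^2) by apply pow2_ge_0.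
    set (u := exp (- mu * Rabs z)) in *.
    assert (Rabs (exp (c * z / 2) * q z) * Rabs (exp (c * z / 2) * (q1 z + c / 2 * q z))
       <= K * u * ((1 + Rabs c) * (K * u))) by (apply Rmult_le_compat; auto).
    assert (K * u * ((1 + Rabs c) * (K * u)) = (1 + Rabs c) * K^2 * (u * u)) by ring.
    assert (0 <= (1 + Rabs c) * K^2) by nra.
    assert ((1 + Rabs c) * K^2 * (u*u) <= (1 + Rabs c) * K^2 * (Cm / (1 + z^2))) by (apply Rmult_le_compat_l; nra).
    lra. }
  assert (Hgp : forall z, 0 <= g z).
  { intro z. unfold g. pose proof (pow2_ge_0 0).
    assert (forall x, 0 <= x * x) by (intro x; nra). 
    pose proof (H0 (exp (c * z / 2) * (q1 z + c / 2 * q z))).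
    pose proof (H0 (exp (c * z / 2) * p z - r * (exp (c * z / 2) * q z))).
    pose proof (H0 (exp (c * z / 2) * q z)). nra. }
  assert (Hg0 : 0 < g z0).
  { pose proof (exp_pos (c * z0 / 2)) as Hep.
    assert (forall x, 0 <= x * x) by (intro x; nra).
    pose proof (H (exp (c * z0 / 2) * (q1 z0 + c / 2 * q z0))).
    pose proof (H (exp (c * z0 / 2) * p z0 - r * (exp (c * z0 / 2) * q z0))).
    assert (Hgz : g z0 = beta * ((exp (c * z0 / 2) * (q1 z0 + c / 2 * q z0)) * (exp (c * z0 / 2) * (q1 z0 + c / 2 * q z0)))
      + (exp (c * z0 / 2) * p z0 - r * (exp (c * z0 / 2) * q z0)) * (exp (c * z0 / 2) * p z0 - r * (exp (c * z0 / 2) * q z0))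
      + s * ((exp (c * z0 / 2) * q z0) * (exp (c * z0 / 2) * q z0))) by reflexivity.
    rewrite Hgz.
    set (P := exp (c * z0 / 2) * p z0) in *. set (Q := exp (c * z0 / 2) * q z0) in *.
    set (Q1 := exp (c * z0 / 2) * (q1 z0 + c / 2 * q z0)) in *.
    assert (HbQ : 0 <= beta * (Q1 * Q1)) by (pose proof (H Q1); nra).
    destruct (Req_dec (q z0) 0) as [Eq|Nq].
    - destruct Hz0 as [Np|Nq]; [|contradiction].
      assert (HQ : Q = 0) by (unfold Q; rewrite Eq; ring).
      assert (P <> 0) by (apply Rmult_integral_contrapositive; split; lra).
      assert (0 < P * P).
      { destruct (Rlt_or_le 0 P) as [Hpo|Hle]; [nra|]. destruct Hle as [Hlt|Heq]; [nra|]. exfalso; auto. }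
      rewrite HQ. replace (P - r * 0) with P by ring. nra.
    - assert (Q <> 0) by (apply Rmult_integral_contrapositive; split; lra).
      assert (0 < Q * Q).
      { destruct (Rlt_or_le 0 Q) as [Hpo|Hle]; [nra|]. destruct Hle as [Hlt|Heq]; [nra|]. exfalso; auto. }
      nra. }
  destruct (improper_pos g (Cg * K^2 * Cm) z0 Hcg Hgp Hgb Hg0) as [G [Lm [Lp [HG [HLp [HLm Hlt]]]]]].
  destruct (tends0 hh _ Hhb) as [Thp Thm].
  exists (Lp - Lm). split; [|lra].
  exists (fun z => G z - beta * hh z), Lm, Lp. split; [|split; [|split]]; auto.
  - intro z. eapply deq. apply derivable_pt_lim_minus. apply HG. apply derivable_pt_lim_scal. apply dh.
    unfold g. cbv beta.
    assert (exp (c * z) = exp (c*z/2) * exp (c*z/2)) by (rewrite <- exp_plus; f_equal; field).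
    rewrite H. unfold beta, s, r. field. lra.
  - intros e0 He0. destruct (HLp (e0/2) ltac:(lra)) as [A1 H1].
    destruct (Thp (e0/(2*beta)) ltac:(apply Rdiv_lt_0_compat; lra)) as [A2 H2].
    exists (Rmax A1 A2). intros z Hz.
    specialize (H1 z (Rle_trans _ _ _ (Rmax_l _ _) Hz)).
    specialize (H2 z (Rle_trans _ _ _ (Rmax_r _ _) Hz)).
    replace (G z - beta * hh z - Lp) with ((G z - Lp) + (- (beta * hh z))) by ring.
    eapply Rle_lt_trans. apply Rabs_triang. rewrite Rabs_Ropp, Rabs_mult, (Rabs_right beta) by lra.
    assert (beta * Rabs (hh z) < beta * (e0 / (2*beta))) by (apply Rmult_lt_compat_l; lra).
    replace (beta * (e0 / (2*beta))) with (e0/2) in H by (field; lra). lra.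
  - intros e0 He0. destruct (HLm (e0/2) ltac:(lra)) as [A1 H1].
    destruct (Thm (e0/(2*beta)) ltac:(apply Rdiv_lt_0_compat; lra)) as [A2 H2].
    exists (Rmin A1 A2). intros z Hz.
    specialize (H1 z (Rle_trans _ _ _ Hz (Rmin_l _ _))).
    specialize (H2 z (Rle_trans _ _ _ Hz (Rmin_r _ _))).
    replace (G z - beta * hh z - Lm) with ((G z - Lm) + (- (beta * hh z))) by ring.
    eapply Rle_lt_trans. apply Rabs_triang. rewrite Rabs_Ropp, Rabs_mult, (Rabs_right beta) by lra.
    assert (beta * Rabs (hh z) < beta * (e0 / (2*beta))) by (apply Rmult_lt_compat_l; lra).
    replace (beta * (e0 / (2*beta))) with (e0/2) in H by (field; lra). lra.
Qed.
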